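(* Let $(\mathbb{K},\partial)$ be a differential field whose field of constants $C$ is algebraically closed of characteristic zero, let $L\in\mathbb{K}[\partial]$ be of order $n$ in normal form, and let $\mathcal{G}=\{G_0=1,G_1,\ldots,G_{t-1}\}$ be a Goodearl basis of $\mathcal{C}(L)$ as a $C[L]$-module. Then the differential ideal $[\mathrm{BC}(L)]$ is a prime ideal of $\mathbb{K}[\lambda,\mu_1,\ldots,\mu_{t-1}]$.
   Context: $L=\partial^n+u_{n-2}\partial^{n-2}+\dots+u_0$. $\mathcal{C}(L)=\{A\in\mathbb{K}[\partial]:LA=AL\}$. A Goodearl basis is a $C[L]$-module basis $\{G_0=1,\ldots,G_{t-1}\}$ of $\mathcal{C}(L)$ in which each $G_k$ has minimal order among $Q\in\mathcal{C}(L)$ with $\mathrm{ord}(Q)\equiv\mathrm{ord}(G_k)\pmod n$ and the classes $\mathrm{ord}(G_k)\bmod n$ are pairwise distinct and exhaust the classes mod $n$ of orders of elements of $\mathcal{C}(L)$. $\mathrm{BC}(L)\subset C[\lambda,\mu_1,\ldots,\mu_{t-1}]$ is the kernel of the $C$-algebra map $\phi_L$: $\lambda\mapsto L$, $\mu_i\mapsto G_i$. $[\mathrm{BC}(L)]$ is the differential ideal generated by $\mathrm{BC}(L)$ in $\mathbb{K}[\lambda,\mu_1,\ldots,\mu_{t-1}]$, whose derivation extends $\partial$ on coefficients with $\partial(\lambda)=\partial(\mu_i)=0$. *)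

(* Defs.v *)
From HB Require Import structures.
From mathcomp Require Import all_boot all_order all_algebra.
From mathcomp Require Import mpoly.
Set Implicit Arguments. Unset Strict Implicit. Unset Printing Implicit Defensive.
Import Order.TTheory GRing.Theory.
Local Open Scope ring_scope.

Section DiffOps.
Variables (K : fieldType) (d : K -> K).

Definition is_derivation : Prop :=
  (forall x y, d (x + y) = d x + d y) /\ (forall x y, d (x * y) = d x * y + x * d y).

Definition is_const (x : K) : bool := d x == 0.

Definition constants_alg_closed : Prop :=
  forall p : {poly K}, (forall i, is_const p`_i) -> (1 < size p)%N ->
    exists2 x, is_const x & root p x.

(* Differential operators K[∂]: A : {poly K} represents sum_i A`_i ∂^i
   (coefficients on the left).  Multiplication is the Ore product with
   ∂ a = a ∂ + d a. *)
Definition dop_dmul (B : {poly K}) : {poly K} := 'X * B + map_poly d B.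

Definition dop_mul (A B : {poly K}) : {poly K} :=
  \sum_(i < size A) A`_i *: iter i dop_dmul B.

Definition dop_exp (A : {poly K}) (k : nat) : {poly K} := iter k (dop_mul A) 1.

Definition dop_ord (A : {poly K}) : nat := (size A).-1.

Definition normal_form (n : nat) (L : {poly K}) : Prop :=
  size L = n.+1 /\ lead_coef L = 1 /\ ((0 < n)%N -> L`_n.-1 = 0).

Definition in_centralizer (L A : {poly K}) : Prop := dop_mul L A = dop_mul A L.

Definition const_poly (p : {poly K}) : Prop := forall i, is_const p`_i.

Definition dop_eval (p : {poly K}) (L : {poly K}) : {poly K} :=
  \sum_(i < size p) p`_i *: dop_exp L i.

Definition is_CL_basis (L : {poly K}) (t : nat) (G : 'I_t -> {poly K}) : Prop :=
  [/\ (forall k, in_centralizer L (G k)),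
      (forall A, in_centralizer L A ->
         exists p : 'I_t -> {poly K}, (forall k, const_poly (p k)) /\
           A = \sum_(k < t) dop_mul (dop_eval (p k) L) (G k)) &
      (forall p : 'I_t -> {poly K}, (forall k, const_poly (p k)) ->
         \sum_(k < t) dop_mul (dop_eval (p k) L) (G k) = 0 -> forall k, p k = 0)].

Definition is_Goodearl_basis (n : nat) (L : {poly K}) (t : nat) (G : 'I_t -> {poly K}) : Prop :=
  [/\ @is_CL_basis L t G,
      (0 < t)%N /\ (forall k : 'I_t, val k = 0%N -> G k = 1),
      (forall k, G k != 0 /\
         forall Q, in_centralizer L Q -> Q != 0 ->
           dop_ord Q = dop_ord (G k) %[mod n] -> (dop_ord (G k) <= dop_ord Q)%N),
      (forall k l, dop_ord (G k) = dop_ord (G l) %[mod n] -> k = l) &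
      (forall Q, in_centralizer L Q -> Q != 0 ->
         exists k, dop_ord Q = dop_ord (G k) %[mod n])].

(* Polynomial ring K[λ, μ_1, ..., μ_{t-1}] = {mpoly K[t]}:
   variable 0 is λ, variable k >= 1 is μ_k. *)
Definition phi_gen (L : {poly K}) (t : nat) (G : 'I_t -> {poly K}) (k : 'I_t) : {poly K} :=
  if val k == 0%N then L else G k.

Definition phi_L (L : {poly K}) (t : nat) (G : 'I_t -> {poly K}) (P : {mpoly K[t]}) : {poly K} :=
  \sum_(m <- msupp P)
     P@_m *: \big[dop_mul/1]_(k < t) dop_exp (phi_gen L G k) (m k).

Definition BC (L : {poly K}) (t : nat) (G : 'I_t -> {poly K}) (P : {mpoly K[t]}) : Prop :=
  (forall m, is_const P@_m) /\ phi_L L G P = 0.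

Definition mpoly_der (t : nat) (P : {mpoly K[t]}) : {mpoly K[t]} :=
  \sum_(m <- msupp P) d P@_m *: 'X_[m].

End DiffOps.

Definition is_ideal (R : comRingType) (I : R -> Prop) : Prop :=
  [/\ I 0, (forall a b, I a -> I b -> I (a + b)) & (forall r a, I a -> I (r * a))].

Definition prime_ideal (R : comRingType) (I : R -> Prop) : Prop :=
  [/\ is_ideal I, ~ I 1 & forall a b, I (a * b) -> I a \/ I b].

Definition diff_ideal_gen (K : fieldType) (d : K -> K) (t : nat)
    (S : {mpoly K[t]} -> Prop) (P : {mpoly K[t]}) : Prop :=
  forall I : {mpoly K[t]} -> Prop, is_ideal I -> (forall x, S x -> I x) ->
    (forall x, I x -> I (mpoly_der d x)) -> I P.

(* Main.v *)
Require Import Defs.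
From HB Require Import structures.
From mathcomp Require Import all_boot all_order all_algebra.
From mathcomp Require Import mpoly.
From mathcomp Require Import ring zify.
Set Implicit Arguments. Unset Strict Implicit. Unset Printing Implicit Defensive.
Import Order.TTheory GRing.Theory.
Local Open Scope ring_scope.

Section DOpBasics.
Variables (K : fieldType) (d : K -> K).
Hypothesis Hd : is_derivation d.

Lemma dD x y : d (x + y) = d x + d y. Proof. by case: Hd. Qed.
Lemma dM x y : d (x * y) = d x * y + x * d y. Proof. by case: Hd. Qed.
Lemma d0 : d 0 = 0.
Proof. by apply: (@addrI _ (d 0)); rewrite -dD !addr0. Qed.
Lemma dN x : d (- x) = - d x.
Proof. by apply/eqP; rewrite -addr_eq0 -dD addNr d0. Qed.
Lemma dB x y : d (x - y) = d x - d y. Proof. by rewrite dD dN. Qed.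
Lemma d1 : d 1 = 0.
Proof. have h := dM 1 1; rewrite !mul1r mulr1 in h.
by apply: (@addrI _ (d 1)); rewrite addr0 -h. Qed.
Lemma dn k : d k%:R = 0.
Proof. by elim: k => [|k IH]; rewrite ?d0 // mulrS dD IH d1 addr0. Qed.
Lemma d_sum (I : Type) (r : seq I) (P : pred I) (F : I -> K) :
  d (\sum_(i <- r | P i) F i) = \sum_(i <- r | P i) d (F i).
Proof. exact: (big_morph d dD d0). Qed.
Lemma dMc x c : d c = 0 -> d (x * c) = d x * c.
Proof. by move=> dc; rewrite dM dc mulr0 addr0. Qed.
Lemma dMcc a b : d a = 0 -> d b = 0 -> d (a * b) = 0.
Proof. by move=> da db; rewrite dM da db mulr0 mul0r addr0. Qed.
Lemma dXc a k : d a = 0 -> d (a ^+ k) = 0.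
Proof. by move=> da; elim: k => [|k IH]; rewrite ?expr0 ?d1 // exprS dMcc. Qed.
Lemma dVc a : d a = 0 -> d (a^-1) = 0.
Proof.
move=> da; have [->|a0] := eqVneq a 0; first by rewrite invr0 d0.
have := d1; rewrite -(mulfV a0) dM da mul0r add0r => /eqP.
by rewrite mulf_eq0 (negbTE a0) => /eqP.
Qed.

Local Notation D := (dop_dmul d).
Local Notation "A ** B" := (dop_mul d A B) (at level 40, left associativity).

Lemma coefDm (B : {poly K}) i : (D B)`_i = (if i is j.+1 then B`_j else 0) + d B`_i.
Proof. by rewrite /dop_dmul coefD coefXM coef_map_id0 ?d0 //; case: i. Qed.

Lemma DD (A B : {poly K}) : D (A + B) = D A + D B.
Proof. by apply/polyP=> i; rewrite coefD !coefDm; case: i => [|i]; rewrite !coefD dD ?add0r // addrACA. Qed.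
Lemma D0 : D 0 = 0.
Proof. by apply/polyP=> i; rewrite coefDm !coef0 d0 addr0; case: i => *; rewrite ?coef0. Qed.
Lemma DN (A : {poly K}) : D (- A) = - D A.
Proof. by apply/eqP; rewrite -addr_eq0 -DD addNr D0. Qed.
Lemma DZ c (A : {poly K}) : D (c *: A) = c *: D A + d c *: A.
Proof.
apply/polyP=> i; rewrite coefDm [RHS]coefD !coefZ coefDm dM.
by case: i => [|j]; rewrite ?coefZ; ring.
Qed.
Lemma DZc c (A : {poly K}) : d c = 0 -> D (c *: A) = c *: D A.
Proof. by move=> dc; rewrite DZ dc scale0r addr0. Qed.

Definition Di i B := iter i D B.
Lemma DiS i B : Di i.+1 B = D (Di i B). Proof. by []. Qed.
Lemma DiD i A B : Di i (A + B) = Di i A + Di i B.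
Proof. by elim: i => [//|i IH]; rewrite !DiS IH DD. Qed.
Lemma Di0 i : Di i 0 = 0.
Proof. by elim: i => [//|i IH]; rewrite !DiS IH D0. Qed.
Lemma DiN i A : Di i (- A) = - Di i A.
Proof. by apply/eqP; rewrite -addr_eq0 -DiD addNr Di0. Qed.
Lemma DiZc i c A : d c = 0 -> Di i (c *: A) = c *: Di i A.
Proof. by move=> dc; elim: i => [//|i IH]; rewrite !DiS IH DZc. Qed.
Lemma Di_sum (I : Type) (r : seq I) (P : pred I) (F : I -> {poly K}) i :
  Di i (\sum_(j <- r | P j) F j) = \sum_(j <- r | P j) Di i (F j).
Proof. exact: (big_morph (Di i) (DiD i) (Di0 i)). Qed.

Lemma Di1 i : Di i 1 = 'X^i.
Proof.
elim: i => [|i IH]; first by rewrite expr0.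
rewrite DiS IH; apply/polyP=> j.
by rewrite coefDm !coefXn dn addr0; case: j => [|j]; rewrite ?coefXn.
Qed.
Lemma DiC i c : d c = 0 -> Di i c%:P = c *: 'X^i.
Proof. by move=> dc; rewrite -[c%:P]mulr1 -scale_polyE DiZc // Di1. Qed.

Lemma dop_mulE (A B : {poly K}) N : (size A <= N)%N ->
  A ** B = \sum_(i < N) A`_i *: Di i B.
Proof.
move=> le; rewrite /dop_mul (big_ord_widen N (fun i => A`_i *: Di i B) le) big_mkcond /=.
apply: eq_bigr => i _; case: ifP => // /negbT; rewrite -leqNgt => /(nth_default 0) ->.
by rewrite scale0r.
Qed.

Lemma mul0d (B : {poly K}) : 0 ** B = 0.
Proof. by rewrite /dop_mul size_poly0 big_ord0. Qed.
Lemma muld0 (A : {poly K}) : A ** 0 = 0.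
Proof. by rewrite /dop_mul big1 // => i _; rewrite -/(Di i 0) Di0 scaler0. Qed.
Lemma muldDl (A B C : {poly K}) : (A + B) ** C = A ** C + B ** C.
Proof.
set N := maxn (size A) (size B).
rewrite !(@dop_mulE _ _ N) ?leq_maxl ?leq_maxr ?(leq_trans (size_polyD _ _)) //.
by rewrite -big_split; apply: eq_bigr => i _; rewrite coefD scalerDl.
Qed.
Lemma muldDr (A B C : {poly K}) : A ** (B + C) = A ** B + A ** C.
Proof.
by rewrite /dop_mul -big_split; apply: eq_bigr => i _; rewrite -/(Di _ _) DiD scalerDr.
Qed.
Lemma muldZl c (A B : {poly K}) : (c *: A) ** B = c *: (A ** B).
Proof.
rewrite !(@dop_mulE _ _ (size A)) ?size_scale_leq // scaler_sumr.
by apply: eq_bigr => i _; rewrite coefZ scalerA.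
Qed.
Lemma muldZrc c (A B : {poly K}) : d c = 0 -> A ** (c *: B) = c *: (A ** B).
Proof.
move=> dc; rewrite /dop_mul scaler_sumr; apply: eq_bigr => i _.
by rewrite -/(Di _ _) DiZc // !scalerA mulrC.
Qed.
Lemma mul1d (B : {poly K}) : 1 ** B = B.
Proof. by rewrite /dop_mul size_poly1 big_ord1 coefC eqxx scale1r. Qed.
Lemma muld1 (A : {poly K}) : A ** 1 = A.
Proof.
rewrite /dop_mul -[RHS]coefK poly_def; apply: eq_bigr => i _.
by rewrite -/(Di _ _) Di1.
Qed.
Lemma mulCd c (B : {poly K}) : c%:P ** B = c *: B.
Proof. by rewrite (@dop_mulE _ _ 1) ?size_polyC ?leq_b1 // big_ord1 coefC eqxx. Qed.
Lemma muldC c (A : {poly K}) : d c = 0 -> A ** c%:P = c *: A.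
Proof.
move=> dc; rewrite -{2}[A]coefK poly_def /dop_mul scaler_sumr; apply: eq_bigr => i _.
by rewrite -/(Di _ _) DiC // !scalerA mulrC.
Qed.

Lemma muld_suml (I : Type) (r : seq I) (P : pred I) (F : I -> {poly K}) C :
  (\sum_(j <- r | P j) F j) ** C = \sum_(j <- r | P j) (F j ** C).
Proof. exact: (big_morph (fun A => A ** C) (fun A B => muldDl A B C) (mul0d C)). Qed.

Lemma D_sum (I : Type) (r : seq I) (P : pred I) (F : I -> {poly K}) :
  D (\sum_(j <- r | P j) F j) = \sum_(j <- r | P j) D (F j).
Proof. exact: (big_morph D DD D0). Qed.

Lemma D_mul (B C : {poly K}) : D (B ** C) = (D B) ** C.
Proof.
rewrite {2}/dop_dmul muldDl.
have -> : map_poly d B ** C = \sum_(i < size B) d B`_i *: Di i C.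
  rewrite (@dop_mulE _ _ (size B)); last first.
    by apply/leq_sizeP => j le; rewrite coef_map_id0 ?d0 // nth_default // d0.
  by apply: eq_bigr => i _; rewrite coef_map_id0 ?d0.
have -> : ('X * B) ** C = \sum_(i < size B) B`_i *: Di i.+1 C.
  rewrite (@dop_mulE _ _ (size B).+1); last first.
    have [->|B0] := eqVneq B 0; first by rewrite mulr0 size_poly0.
    by rewrite mulrC size_mulX.
  by rewrite big_ord_recl coefXM eqxx scale0r add0r; apply: eq_bigr => i _; rewrite coefXM.
rewrite -big_split /dop_mul D_sum; apply: eq_bigr => i _.
by rewrite DZ.
Qed.

Lemma Di_mul i (B C : {poly K}) : Di i (B ** C) = (Di i B) ** C.
Proof. by elim: i => [//|i IH]; rewrite !DiS IH D_mul. Qed.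

Lemma muldA (A B C : {poly K}) : A ** (B ** C) = (A ** B) ** C.
Proof.
have -> : A ** B = \sum_(i < size A) A`_i *: Di i B by [].
rewrite muld_suml; apply: eq_bigr => i _.
by rewrite -/(Di _ _) Di_mul muldZl.
Qed.


Lemma size_coefE (p : {poly K}) k :
  p`_k != 0 -> (forall j, (k < j)%N -> p`_j = 0) -> size p = k.+1.
Proof.
move=> nz hi; apply/eqP; rewrite eqn_leq; apply/andP; split.
  by apply/leq_sizeP => j; apply: hi.
rewrite ltnNge; apply/negP => /leq_sizeP h; by move: nz; rewrite h // eqxx.
Qed.

Lemma Di_top i (B : {poly K}) s : (size B <= s.+1)%N ->
  (forall j, (s + i < j)%N -> (Di i B)`_j = 0) /\ (Di i B)`_(s + i) = B`_s.
Proof.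
move=> hB; elim: i => [|i [IH1 IH2]].
  by rewrite addn0; split => // j hj; apply: nth_default; apply: leq_trans hB hj.
split.
  move=> [|j] hj; first by rewrite ltn0 in hj.
  by rewrite DiS coefDm !IH1 ?d0 ?addr0 // -?addnS // (leq_trans _ hj).
by rewrite DiS coefDm addnS IH2 IH1 ?d0 ?addr0.
Qed.

Lemma Di_sub i (B : {poly K}) k : (size B <= k.+2)%N ->
  (Di i B)`_(k + i) = B`_k + d (B`_k.+1) *+ i.
Proof.
move=> hB; elim: i => [|i IH]; first by rewrite addn0 mulr0n addr0.
have [_ T] := Di_top i hB.
by rewrite DiS coefDm addnS IH -addSn T mulrSr addrA.
Qed.

Lemma coef_dmul (A B : {poly K}) j :
  (A ** B)`_j = \sum_(i < size A) A`_i * (Di i B)`_j.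
Proof. by rewrite /dop_mul coef_sum; apply: eq_bigr => i _; rewrite coefZ. Qed.

Lemma size_dmul (A B : {poly K}) : A != 0 -> B != 0 ->
  size (A ** B) = (size A + size B).-1 /\ lead_coef (A ** B) = lead_coef A * lead_coef B.
Proof.
rewrite -!size_poly_gt0 => hA hB.
move: (hA) (hB); case eA: (size A) => [|a] // _; case eB: (size B) => [|b] // _.
have hBb : (size B <= b.+1)%N by rewrite eB.
have cf j : (a + b <= j)%N -> (A ** B)`_j = if j == (a + b)%N then A`_a * B`_b else 0.
  move=> hj; rewrite coef_dmul eA big_ord_recr /= big1 ?add0r.
    have [_ T] := Di_top a hBb; have [T1 _] := Di_top a hBb.
    case: eqP => [->|ne]; first by rewrite addnC T.
    by rewrite T1 ?mulr0 // addnC ltn_neqAle hj andbT eq_sym; apply/eqP.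
  move=> i _; have [T1 _] := Di_top i hBb; rewrite T1 ?mulr0 //.
  by apply: leq_trans hj; rewrite addnC ltn_add2r.
have nz : A`_a * B`_b != 0.
  rewrite mulf_eq0 negb_or.
  have := hA; rewrite size_poly_gt0 -lead_coef_eq0 /lead_coef eA /= => ->.
  by have := hB; rewrite size_poly_gt0 -lead_coef_eq0 /lead_coef eB /= => ->.
have sz : size (A ** B) = (a + b).+1.
  apply: size_coefE; first by rewrite cf // eqxx.
  by move=> j hj; rewrite cf ?(ltnW hj) // gtn_eqF.
split; first by rewrite sz addSn addnS.
by rewrite /lead_coef sz /= cf // eqxx eA eB.
Qed.

Lemma lead_const_aux (L X : {poly K}) n' k :
  (n'.+1)%:R != 0 :> K ->
  size L = n'.+2 -> lead_coef L = 1 -> size X = k.+2 ->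
  L ** X = X ** L -> d (lead_coef X) = 0.
Proof.
move=> chn sL lL sX comm.
have lL' : L`_n'.+1 = 1 by rewrite -lL /lead_coef sL.
have hX : (size X <= k.+2)%N by rewrite sX.
have hX1 : (size X <= k.+1.+1)%N by rewrite sX.
have hL : (size L <= n'.+2)%N by rewrite sL.
have hL1 : (size L <= n'.+1.+1)%N by rewrite sL.
have := congr1 (fun p : {poly K} => p`_(n' + k.+1)) comm => /=.
rewrite !coef_dmul sL sX !big_ord_recr /= !big1 ?add0r; first last.
- move=> i _; have [T1 _] := Di_top i hX1; rewrite T1 ?mulr0 //.
  by rewrite addnC ltn_add2r.
- move=> i _; have [T1 _] := Di_top i hL1; rewrite T1 ?mulr0 //.
  by rewrite addSn addnS ltnS ltn_add2l.
rewrite -!DiS.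
have [_ T2] := Di_top n' hX1; rewrite addnC T2.
have -> : (k.+1 + n' = k + n'.+1)%N by rewrite addnS addSn.
rewrite Di_sub // lL' mul1r.
have [_ T3] := Di_top k hL1; rewrite (addnC k n'.+1) T3 lL' mulr1.
rewrite addSnnS Di_sub // lL' d1 mul0rn addr0.
set t := d X`_k.+1 *+ n'.+1 => h.
have : t = 0.
  have := congr1 (fun x => x - (X`_k + X`_k.+1 * L`_n')) h; rewrite subrr => <-.
  by ring.
rewrite /t -mulr_natr => /eqP; rewrite mulf_eq0 (negbTE chn) orbF.
by rewrite /lead_coef sX => /eqP.
Qed.

End DOpBasics.

Definition dop (K : fieldType) (d : K -> K) (Hd : is_derivation d) : Type := {poly K}.
HB.instance Definition _ (K : fieldType) d (Hd : is_derivation d) :=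
  GRing.Lmodule.copy (@dop K d Hd) {poly K}.
HB.instance Definition _ (K : fieldType) d (Hd : is_derivation d) :=
  GRing.Zmodule_isNzRing.Build (@dop K d Hd) (@muldA K d Hd) (@mul1d K d) (@muld1 K d Hd)
     (@muldDl K d) (@muldDr K d Hd) (oner_neq0 {poly K}).
HB.instance Definition _ (K : fieldType) d (Hd : is_derivation d) :=
  GRing.Lmodule_isLalgebra.Build K (@dop K d Hd) (fun c (x y : dop Hd) => esym (@muldZl K d c x y)).

Section Comm.
Variables (K : fieldType) (d : K -> K) (Hd : is_derivation d).
Hypothesis chK : [pchar K] =i pred0.
Local Notation R := (dop Hd).
Local Notation sz x := (size (x : {poly K})).
Local Notation lc x := (lead_coef (x : {poly K})).

Lemma natK_neq0 k : (k.+1)%:R != 0 :> K.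
Proof. by move/pcharf0P: chK => ->. Qed.

Lemma szR0 : sz (0 : R) = 0%N. Proof. exact: size_poly0. Qed.

Lemma mulRE (x y : R) : x * y = dop_mul d x y. Proof. by []. Qed.

Lemma scaleRE c (x : R) : c *: x = (c%:P : R) * x.
Proof. by rewrite mulRE mulCd. Qed.

Lemma commC c (x : R) : d c = 0 -> GRing.comm (c%:P : R) x.
Proof. by move=> dc; rewrite /GRing.comm !mulRE mulCd muldC. Qed.

Lemma mulRZc c (x y : R) : d c = 0 -> x * (c *: y) = c *: (x * y).
Proof. by move=> dc; rewrite !mulRE muldZrc. Qed.

Lemma smul (x y : R) : x != 0 -> y != 0 ->
  sz (x * y) = (sz x + sz y).-1 /\ lc (x * y) = lc x * lc y.
Proof. exact: size_dmul. Qed.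

Lemma mulR_neq0 (x y : R) : x != 0 -> y != 0 -> x * y != 0.
Proof.
move=> x0 y0; have [s _] := smul x0 y0.
have hx : (0 < sz x)%N by rewrite size_poly_gt0.
have hy : (0 < sz y)%N by rewrite size_poly_gt0.
apply/eqP => h; move: s; rewrite h size_poly0; lia.
Qed.

Lemma sexp (x : R) k : x != 0 ->
  sz (x ^+ k) = (k * (sz x).-1).+1 /\ lc (x ^+ k) = lc x ^+ k.
Proof.
move=> x0; elim: k => [|k [IH1 IH2]].
  by rewrite expr0 mul0n size_poly1 lead_coef1.
have xk0 : x ^+ k != 0.
  by apply/eqP => h; move: IH1; rewrite h size_poly0.
have [s l] := smul x0 xk0; rewrite exprS s l IH1 IH2 -exprS; split => //.
have : (0 < sz x)%N by rewrite size_poly_gt0.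
case: (sz x) => // a _ /=.
by rewrite addnS /= mulSn addnC.
Qed.

Lemma addsame (p q : {poly K}) m : size p = m.+1 -> size q = m.+1 ->
  lead_coef p + lead_coef q != 0 ->
  size (p + q) = m.+1 /\ lead_coef (p + q) = lead_coef p + lead_coef q.
Proof.
move=> sp sq nz.
have c : (p + q)`_m = lead_coef p + lead_coef q by rewrite coefD /lead_coef sp sq.
have s : size (p + q) = m.+1.
  apply: size_coefE; first by rewrite c.
  move=> j hj; rewrite coefD !nth_default ?addr0 //; by [rewrite sq | rewrite sp].
by split => //; rewrite /lead_coef s /= c.
Qed.

Variables (n : nat) (L : R).
Hypotheses (sL : sz L = n.+1) (lL : lc L = 1) (n0 : (0 < n)%N).
Local Notation inS X := (GRing.comm L X).

Lemma L_neq0 : L != 0.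
Proof. by rewrite -size_poly_gt0 sL. Qed.

Lemma leadS (X : R) : inS X -> X != 0 -> d (lc X) = 0.
Proof.
move=> SX X0.
have SY : inS (X * L) by apply: commrM => //; apply: commr_refl.
have [s l] := smul X0 L_neq0.
have hx : (0 < sz X)%N by rewrite size_poly_gt0.
rewrite lL mulr1 sL in l s; rewrite -l.
apply: (@lead_const_aux K d Hd L (X * L) n.-1 (sz X + n).-2).
- exact: natK_neq0.
- by rewrite sL; case: n n0.
- exact: lL.
- rewrite s; lia.
- exact: SY.
Qed.

Lemma lcS_neq0 (X : R) : X != 0 -> lc X != 0.
Proof. by rewrite lead_coef_eq0. Qed.

Section CommP.
Variable P : R.
Hypothesis SP : inS P.
Let dl (Y : R) := P * Y - Y * P.

Lemma dl_mul (Y Z : R) : dl (Y * Z) = dl Y * Z + Y * dl Z.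
Proof.
by rewrite /dl mulrBl mulrBr !mulrA addrA subrK.
Qed.

Lemma dl_pow (Y : R) k : dl Y != 0 ->
  sz (dl (Y ^+ k.+1)) = (sz (dl Y) + k * (sz Y).-1)%N /\ lc (dl (Y ^+ k.+1)) = (k.+1)%:R * lc (dl Y) * lc Y ^+ k.
Proof.
move=> dY.
have Y0 : Y != 0 by apply: contraNneq dY => ->; rewrite /dl mulr0 mul0r subrr.
have hs : (0 < sz (dl Y))%N by rewrite size_poly_gt0.
have hy : (0 < sz Y)%N by rewrite size_poly_gt0.
elim: k => [|k [IH1 IH2]]; first by rewrite mul0n addn0 expr1 mul1r expr0 mulr1.
have Yk0 : Y ^+ k.+1 != 0.
  by apply/eqP => h; have [se _] := sexp k.+1 Y0; move: se; rewrite h szR0.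
have dk0 : dl (Y ^+ k.+1) != 0.
  by apply/eqP => h; move: IH1; rewrite h szR0 => /eqP; rewrite eq_sym addn_eq0 => /andP [/eqP e _]; move: hs; rewrite e.
rewrite exprS dl_mul.
have [s1 l1] := smul dY Yk0; have [s2 l2] := smul Y0 dk0.
have [se le] := sexp (k.+1) Y0.
rewrite se in s1; rewrite le in l1; rewrite IH1 in s2; rewrite IH2 in l2.
have E : lc (dl Y * Y ^+ k.+1) + lc (Y * dl (Y ^+ k.+1)) =
    (k.+2)%:R * lc (dl Y) * lc Y ^+ k.+1.
  by rewrite l1 l2 exprS; ring.
have nz : lc (dl Y * Y ^+ k.+1) + lc (Y * dl (Y ^+ k.+1)) != 0.
  by rewrite E !mulf_neq0 ?natK_neq0 ?lcS_neq0 ?expf_neq0 ?lcS_neq0.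
rewrite mulSn in s1 *; set kx := (k * _)%N in s1 s2 *.
have e1 : sz (dl Y * Y ^+ k.+1) = (sz (dl Y) + ((sz Y).-1 + kx)).-1.+1 by rewrite s1; lia.
have e2 : sz (Y * dl (Y ^+ k.+1)) = (sz (dl Y) + ((sz Y).-1 + kx)).-1.+1 by rewrite s2; lia.
have [a1 a2] := addsame e1 e2 nz.
split; first by rewrite a1; lia.
by rewrite a2 E.
Qed.

Lemma dl_step (Y : R) : inS Y -> dl Y != 0 -> exists Z : R,
  [/\ inS Z, dl Z != 0 & (sz Z + sz P - sz (dl Z) < sz Y + sz P - sz (dl Y))%N].
Proof.
move=> SY dY.
have Y0 : Y != 0 by apply: contraNneq dY => ->; rewrite /dl mulr0 mul0r subrr.
have P0 : P != 0 by apply: contraNneq dY => e; rewrite /dl e mulr0 mul0r subrr.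
have dg : d (lc Y) = 0 := leadS SY Y0.
set x := (sz Y).-1.
have hy : (0 < sz Y)%N by rewrite size_poly_gt0.
have hs : (0 < sz (dl Y))%N by rewrite size_poly_gt0.
have [sZ lZ] := dl_pow n.-1 dY; rewrite prednK // in sZ lZ.
set c := lc Y ^+ n.
have dc : d c = 0 by apply: dXc.
have c0 : c != 0 by rewrite expf_neq0 // lcS_neq0.
set W : R := (c%:P : R) * L ^+ x.
have SW : inS W.
  apply: commrM; first by apply/commr_sym/commC.
  by apply/commrX/commr_refl.
have cPW : GRing.comm P W.
  apply: commrM; first by apply/commr_sym/commC.
  by apply/commrX/commr_sym.
exists (Y ^+ n - W); split.
- by apply: commrB => //; apply: commrX.
- have -> : dl (Y ^+ n - W) = dl (Y ^+ n).
    by rewrite /dl mulrBr mulrBl cPW opprB addrA subrK.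
  by apply/eqP => h; move: sZ; rewrite h szR0 => /eqP; rewrite eq_sym addn_eq0 => /andP [/eqP e _]; move: hs; rewrite e.
have -> : dl (Y ^+ n - W) = dl (Y ^+ n).
  by rewrite /dl mulrBr mulrBl cPW opprB addrA subrK.
have [sY lY] := sexp n Y0.
have [sLx lLx] := sexp x L_neq0.
rewrite sL lL expr1n /= in sLx lLx.
have WE : (W : {poly K}) = c *: (L ^+ x : {poly K}) by rewrite /W -scaleRE.
set Yn := Y ^+ n in sY lY *; set Lx := L ^+ x in sLx lLx WE *.
have szZ : (sz (Yn - W)%R <= n * x)%N.
  apply/leq_sizeP => j hj.
  have -> : ((Yn - W : R) : {poly K})`_j = (Yn : {poly K})`_j - (W : {poly K})`_j.
    exact: coefB.
  rewrite WE coefZ.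
  case: (ltngtP j (n * x)) hj => // [hj _|-> _].
    by rewrite !nth_default ?mulr0 ?subr0 // ?sLx ?sY // mulnC.
  have e1 : (Yn : {poly K})`_(n * x) = c by rewrite /c -lY /lead_coef sY.
  have e2 : (Lx : {poly K})`_(n * x) = 1 by rewrite -lLx /lead_coef sLx mulnC.
  by rewrite e1 e2 mulr1 subrr.
have bnd : (sz (dl Y) <= x + sz P)%N.
  rewrite /dl; apply: leq_trans (size_polyD _ _) _.
  have [s1 _] := smul P0 Y0; have [s2 _] := smul Y0 P0.
  rewrite size_polyN.
  have -> : sz (P * Y) = (x + sz P)%N by rewrite s1; rewrite /x; lia.
  have -> : sz (Y * P) = (x + sz P)%N by rewrite s2; rewrite /x; lia.
  by rewrite maxnn.
rewrite sZ; move: szZ bnd; rewrite /x.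
case: n n0 => // n' _ /=; rewrite mulSn.
set q := (n' * _)%N; move: hy; set y := size (Y : {poly K}); lia.
Qed.

Lemma dl_zero (Y : R) : inS Y -> dl Y = 0.
Proof.
move=> SY; apply/eqP; apply: contraT => dY.
have : forall f (Z : R), inS Z -> (sz Z + sz P - sz (dl Z) <= f)%N -> dl Z = 0.
  elim=> [|f IH] Z SZ hf; apply/eqP; apply: contraT => dZ;
  have [Z' [SZ' dZ' lt]] := dl_step SZ dZ.
    by move: (leq_trans lt hf).
  by move: dZ'; rewrite (IH Z' SZ') ?eqxx // -ltnS; apply: leq_trans lt hf.
by move=> /(_ _ Y SY (leqnn _)) /eqP; rewrite (negbTE dY).
Qed.

End CommP.

Lemma S_comm (P X : R) : inS P -> inS X -> GRing.comm P X.
Proof.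
move=> SP SX; have := dl_zero SP SX; rewrite /GRing.comm => /eqP.
by rewrite subr_eq0 => /eqP.
Qed.

End Comm.

Section Red.
Variables (K : fieldType) (d : K -> K) (Hd : is_derivation d).
Hypothesis chK : [pchar K] =i pred0.
Local Notation R := (dop Hd).
Local Notation sz x := (size (x : {poly K})).
Local Notation lc x := (lead_coef (x : {poly K})).
Variables (n : nat) (L : R).
Hypotheses (sL : sz L = n.+1) (lL : lc L = 1) (n0 : (0 < n)%N).
Local Notation inS X := (GRing.comm L X).

Variable (T : eqType).
Implicit Types (s : seq T) (X : T -> R).

Definition kap X N j0 j := if sz (X j) == N.+1 then lc (X j) / lc (X j0) else 0.
Definition red X N j0 j := X j - kap X N j0 j *: X j0.

Lemma commCs (c : K) (x : R) : d c = 0 -> inS x -> inS (c *: x).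
Proof.
move=> dc Sx; rewrite scaleRE; apply: commrM => //.
by apply/commr_sym/commC.
Qed.

Lemma kap_const X N j0 j : (forall j, inS (X j)) -> sz (X j0) = N.+1 ->
  d (kap X N j0 j) = 0.
Proof.
move=> SX s0; rewrite /kap; case: eqP => [sj|_]; last exact: (d0 Hd).
have nz y : sz (X y) = N.+1 -> X y != 0.
  by move=> e; apply/eqP => h; move: e; rewrite h szR0.
rewrite (dMcc Hd) // ?(dVc Hd) //; apply: (leadS chK sL lL n0 (SX _)); exact: nz.
Qed.

Lemma red_S X N j0 j : (forall j, inS (X j)) -> sz (X j0) = N.+1 -> inS (red X N j0 j).
Proof.
move=> SX s0; rewrite /red; apply: commrB => //.
by apply: commCs => //; apply: kap_const.
Qed.

Lemma red_size X N j0 j : sz (X j0) = N.+1 -> (sz (X j) <= N.+1)%N ->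
  (sz (red X N j0 j) <= N)%N.
Proof.
move=> s0 sj; rewrite /red /kap; case: eqP => [e|ne]; last first.
  by rewrite scale0r subr0; move: sj; rewrite leq_eqVlt => /orP [/eqP//|].
have X0 : lc (X j0) != 0.
  by rewrite lead_coef_eq0; apply/eqP => h; move: s0; rewrite h size_poly0.
apply/leq_sizeP => i hi.
have -> : ((X j - lc (X j) / lc (X j0) *: X j0 : R) : {poly K})`_i =
   (X j : {poly K})`_i - lc (X j) / lc (X j0) * (X j0 : {poly K})`_i.
  by rewrite coefB coefZ.
case: (ltngtP i N) hi => // [hi _|-> _].
  by rewrite !nth_default ?mulr0 ?subr0 // ?s0 ?e.
have -> : (X j0 : {poly K})`_N = lc (X j0) by rewrite /lead_coef s0.
have -> : (X j : {poly K})`_N = lc (X j) by rewrite /lead_coef e.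
by rewrite mulfVK // subrr.
Qed.

Lemma red_sum s X N j0 (c : T -> K) (F : R -> R) :
  (forall j, inS (X j)) -> sz (X j0) = N.+1 ->
  (forall a b k, d k = 0 -> F (a + k *: b) = F a + k *: F b) ->
  \sum_(j <- s) c j *: F (X j) =
  \sum_(j <- s) c j *: F (red X N j0 j) + (\sum_(j <- s) c j * kap X N j0 j) *: F (X j0).
Proof.
move=> SX s0 hF; rewrite scaler_suml -big_split; apply: eq_bigr => j _.
have -> : X j = red X N j0 j + kap X N j0 j *: X j0 by rewrite /red subrK.
by rewrite hF ?scalerDr ?scalerA //; exact: kap_const.
Qed.

Lemma coef_sumZ s (c : T -> K) X i :
  ((\sum_(j <- s) c j *: X j : R) : {poly K})`_i = \sum_(j <- s) c j * (X j : {poly K})`_i.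
Proof.
elim: s => [|a s IH]; first by rewrite !big_nil coef0.
by rewrite !big_cons -IH; exact: (coefD _ _ i) || (rewrite coefD coefZ).
Qed.

Lemma KI s (b : T -> K) N : forall X, (forall j, inS (X j)) ->
  (forall j, j \in s -> (sz (X j) <= N)%N) ->
  \sum_(j <- s) b j *: X j = 0 -> \sum_(j <- s) d (b j) *: X j = 0.
Proof.
elim: N => [|N IH] X SX hs.
  move=> _; rewrite big_seq big1 // => j /hs; rewrite leqn0 size_poly_eq0 => /eqP ->.
  by rewrite scaler0.
case: (boolP (has (fun j => sz (X j) == N.+1) s)) => [/hasP [j0 j0s /eqP s0]|/hasPn hn] hsum;
  last first.
  apply: IH => // j js; have := hs j js; rewrite leq_eqVlt ltnS (negbTE (hn j js)) //.
have hF : forall a b k, d k = 0 -> (fun x : R => x) (a + k *: b) = a + k *: b by [].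
have E := red_sum s b SX s0 hF; rewrite /= in E; rewrite E in hsum.
have hr : forall j, j \in s -> (sz (red X N j0 j) <= N)%N.
  by move=> j js; apply: red_size => //; apply: hs.
have beta0 : \sum_(j <- s) b j * kap X N j0 j = 0.
  have := congr1 (fun p : R => (p : {poly K})`_N) hsum => /=.
  have z : \sum_(j <- s) b j * (red X N j0 j : {poly K})`_N = 0.
    by rewrite big_seq big1 // => j js; rewrite nth_default ?mulr0 // hr.
  rewrite coef0 coefD coef_sumZ z add0r.
  rewrite coefZ => /eqP; rewrite mulf_eq0 => /orP [/eqP //|].
  have -> : (X j0 : {poly K})`_N = lc (X j0) by rewrite /lead_coef s0.
  rewrite lead_coef_eq0 => /eqP h; move: s0; rewrite h size_poly0 //.
rewrite beta0 scale0r addr0 in hsum.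
have SR : forall j, inS (red X N j0 j) by move=> j; apply: red_S.
have h0 := IH _ SR hr hsum.
have E' := red_sum s (fun j => d (b j)) SX s0 hF; rewrite /= in E'.
rewrite E' h0 add0r.
have -> : \sum_(j <- s) d (b j) * kap X N j0 j = d (\sum_(j <- s) b j * kap X N j0 j).
  rewrite (d_sum Hd); apply: eq_bigr => j _; rewrite (dM Hd).
  have KC : d (kap X N j0 j) = 0 by apply: kap_const.
  by rewrite KC mulr0 addr0.
by rewrite beta0 (d0 Hd) scale0r.
Qed.

Lemma smul_le (Y Z : R) : (sz (Y * Z)%R <= (sz Y + sz Z).-1)%N.
Proof.
have [->|Y0] := eqVneq Y 0; first by rewrite mul0r szR0.
have [->|Z0] := eqVneq Z 0; first by rewrite mulr0 szR0.
by have [-> _] := smul Y0 Z0.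
Qed.

Lemma C2 s (b : T -> K) (Y : R) N : Y != 0 -> forall X, (forall j, inS (X j)) ->
  (forall j, j \in s -> (sz (X j) <= N)%N) ->
  \sum_(j <- s) b j *: X j != 0 -> \sum_(j <- s) b j *: (Y * X j) != 0.
Proof.
move=> Y0; have hy : (0 < sz Y)%N by rewrite size_poly_gt0.
elim: N => [|N IH] X SX hs.
  rewrite big_seq big1 ?eqxx // => j /hs; rewrite leqn0 size_poly_eq0 => /eqP ->.
  by rewrite scaler0.
case: (boolP (has (fun j => sz (X j) == N.+1) s)) => [/hasP [j0 j0s /eqP s0]|/hasPn hn] hsum;
  last first.
  apply: IH => // j js; have := hs j js; rewrite leq_eqVlt ltnS (negbTE (hn j js)) //.
have hF : forall a b k, d k = 0 -> (fun x : R => x) (a + k *: b) = a + k *: b by [].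
have hF2 : forall a b k, d k = 0 -> (fun x : R => Y * x) (a + k *: b) = Y * a + k *: (Y * b).
  by move=> a c k dk /=; rewrite mulrDr mulRZc.
have E := red_sum s b SX s0 hF; rewrite /= in E; rewrite E in hsum.
have E2 := red_sum s b SX s0 hF2; rewrite /= in E2; rewrite E2.
have hr : forall j, j \in s -> (sz (red X N j0 j) <= N)%N.
  by move=> j js; apply: red_size => //; apply: hs.
have SR : forall j, inS (red X N j0 j) by move=> j; apply: red_S.
set beta := \sum_(j <- s) b j * kap X N j0 j in hsum *.
have [b0|b0] := eqVneq beta 0.
  rewrite b0 scale0r addr0 in hsum *. rewrite scale0r addr0; exact: (IH _ SR hr hsum).
have X0 : X j0 != 0 by apply/eqP => h; move: s0; rewrite h szR0.
have [sYX _] := smul Y0 X0; rewrite s0 in sYX.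
have szB : sz (beta *: (Y * X j0)) = (sz Y + N)%N.
  by rewrite size_scale // sYX addnS.
have szA : (sz (\sum_(j <- s) b j *: (Y * red X N j0 j))%R < sz Y + N)%N.
  rewrite big_seq; apply: (@big_ind _ (fun p : R => (sz p < sz Y + N)%N)).
  - by rewrite szR0 addn_gt0 hy.
  - move=> p q hp hq; apply: leq_ltn_trans (size_polyD _ _) _.
    by rewrite gtn_max hp hq.
  - move=> j js; apply: leq_ltn_trans (size_scale_leq _ _) _.
    apply: leq_ltn_trans (smul_le _ _) _; have := hr j js; lia.
apply/eqP => h; have := congr1 (fun p : R => sz p) h => /=.
rewrite szR0 addrC size_polyDl; first by rewrite szB; lia.
by rewrite szB.
Qed.

End Red.

Section Psi.
Variables (K : fieldType) (d : K -> K) (Hd : is_derivation d).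
Hypothesis chK : [pchar K] =i pred0.
Local Notation R := (dop Hd).
Local Notation sz x := (size (x : {poly K})).
Local Notation lc x := (lead_coef (x : {poly K})).
Variables (n : nat) (L : R).
Hypotheses (sL : sz L = n.+1) (lL : lc L = 1) (n0 : (0 < n)%N).
Local Notation inS X := (GRing.comm L X).
Variables (t : nat) (G : 'I_t -> {poly K}).
Hypothesis SG : forall k, inS (G k : R).

Definition hg (k : 'I_t) : R := phi_gen L G k.
Definition phm (m : 'X_{1..t}) : R := mmap1 hg m.
Definition Psi (P : {mpoly K[t]}) : R := \sum_(m <- msupp P) P@_m *: phm m.

Lemma S_hg k : inS (hg k).
Proof. by rewrite /hg /phi_gen; case: eqP => _ //; exact: commr_refl. Qed.

Lemma S_phm m : inS (phm m).
Proof. by apply: commr_prod => i _; apply/commrX/S_hg. Qed.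

Lemma dop_expE (A : R) k : dop_exp d A k = A ^+ k.
Proof. by elim: k => [|k IH]; rewrite ?expr0 // exprS -IH. Qed.

Lemma phi_LE P : phi_L d L G P = Psi P.
Proof.
rewrite /phi_L /Psi; apply: eq_bigr => m _; congr (_ *: _).
rewrite /phm /mmap1; elim/big_rec2: _ => // i y1 y2 _ ->.
by rewrite dop_expE.
Qed.

Lemma PsiE_sub P (s : seq 'X_{1..t}) : uniq s -> {subset msupp P <= s} ->
  Psi P = \sum_(m <- s) P@_m *: phm m.
Proof.
move=> us sub; rewrite /Psi [RHS](bigID (fun m => m \in msupp P)) /=.
rewrite [X in _ + X]big1 ?addr0; last first.
  by move=> m; rewrite mcoeff_msupp negbK => /eqP ->; rewrite scale0r.
rewrite -[RHS]big_filter; apply: perm_big; apply: uniq_perm.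
- exact: msupp_uniq.
- exact: filter_uniq.
by move=> m; rewrite mem_filter; case mP: (m \in msupp P) => //=; rewrite sub.
Qed.

Lemma PsiD P Q : Psi (P + Q) = Psi P + Psi Q.
Proof.
set s := undup (msupp P ++ msupp Q).
have us : uniq s by apply: undup_uniq.
rewrite (@PsiE_sub (P + Q) s) ?(@PsiE_sub P s) ?(@PsiE_sub Q s) //.
- by rewrite -big_split; apply: eq_bigr => m _; rewrite mcoeffD scalerDl.
- by move=> m mQ; rewrite mem_undup mem_cat mQ orbT.
- by move=> m mP; rewrite mem_undup mem_cat mP.
- by move=> m /msuppD_le; rewrite mem_undup.
Qed.

Lemma PsiZ c P : Psi (c *: P) = c *: Psi P.
Proof.
rewrite (@PsiE_sub (c *: P) (msupp P)) ?msupp_uniq //; last exact: msuppZ_le.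
by rewrite /Psi scaler_sumr; apply: eq_bigr => m _; rewrite mcoeffZ scalerA.
Qed.

Lemma Psi0 : Psi 0 = 0.
Proof. by rewrite -(scale0r (0 : {mpoly K[t]})) PsiZ scale0r. Qed.

Lemma Psi_sum (I : Type) (r : seq I) (F : I -> {mpoly K[t]}) :
  Psi (\sum_(i <- r) F i) = \sum_(i <- r) Psi (F i).
Proof. exact: (big_morph Psi PsiD Psi0). Qed.

Lemma PsiXZ c m : Psi (c *: 'X_[m]) = c *: phm m.
Proof.
rewrite PsiZ /Psi msuppX big_seq1 mcoeffX eqxx scale1r //.
Qed.

Lemma phm_add m1 m2 : phm (m1 + m2) = phm m1 * phm m2.
Proof.
rewrite /phm /mmap1.
have -> : \prod_(i < t) hg i ^+ (m1 + m2)%MM i = \prod_(i < t) (hg i ^+ m1 i * hg i ^+ m2 i).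
  by apply: eq_bigr => i _; rewrite mnmDE exprD.
elim: (index_enum _) => [|a r IH]; first by rewrite !big_nil mulr1.
rewrite !big_cons IH -!mulrA; congr (_ * _); rewrite !mulrA; congr (_ * _).
apply: commr_prod => i _; apply/commrX/commr_sym/commrX.
by [exact: (S_comm chK sL lL n0 (S_hg a) (S_hg i)) | exact: (S_comm chK sL lL n0 (S_hg i) (S_hg a))].
Qed.

Lemma PsiMX a m' : Psi (a * 'X_[m']) = Psi a * phm m'.
Proof.
rewrite {1}(mpolyE a) big_distrl /= Psi_sum [in RHS]/Psi mulr_suml; apply: eq_bigr => m _.
by rewrite -scalerAl -mpolyXD PsiXZ phm_add scalerAl.
Qed.

Lemma PsiM a b : Psi (a * b) = \sum_(m <- msupp b) b@_m *: (Psi a * phm m).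
Proof.
rewrite {1}(mpolyE b) big_distrr /= Psi_sum; apply: eq_bigr => m _.
by rewrite -scalerAr PsiZ PsiMX.
Qed.

Lemma Psi1 : Psi 1 = 1.
Proof.
rewrite /Psi -mpolyC1 msupp1 big_seq1 mcoeffC eqxx mulr1 scale1r /phm /mmap1.
by rewrite big1 // => i _; rewrite mnm0E expr0.
Qed.

End Psi.

Section Main.
Variables (K : fieldType) (d : K -> K) (Hd : is_derivation d).
Hypothesis chK : [pchar K] =i pred0.
Local Notation R := (dop Hd).
Local Notation sz x := (size (x : {poly K})).
Local Notation lc x := (lead_coef (x : {poly K})).
Variables (n : nat) (L : R).
Hypotheses (sL : sz L = n.+1) (lL : lc L = 1) (n0 : (0 < n)%N).
Local Notation inS X := (GRing.comm L X).
Variables (t : nat) (G : 'I_t -> {poly K}).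
Hypothesis SG : forall k, inS (G k : R).
Implicit Types (P Q a b r : {mpoly K[t]}) (m : 'X_{1..t}).

Local Notation Psi := (@Psi K d Hd L t G).
Local Notation phm := (@phm K d Hd L t G).
Definition J (P : {mpoly K[t]}) := Psi P = 0.
Local Notation DI := (diff_ideal_gen d (BC d L G)).

Lemma coef_der P m : (mpoly_der d P)@_m = d (P@_m).
Proof.
rewrite /mpoly_der raddf_sum /=.
under eq_bigr => m' _ do rewrite mcoeffZ mcoeffX.
case: (boolP (m \in msupp P)) => mP.
  rewrite (bigD1_seq m) ?msupp_uniq //= eqxx mulr1 big1 ?addr0 //.
  by move=> m' /negbTE; rewrite eq_sym => ->; rewrite mulr0.
rewrite big_seq big1; last first.
  by move=> m' m'P; case: eqP => [e|_]; [move: mP; rewrite -e m'P | rewrite mulr0].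
by move: mP; rewrite mcoeff_msupp negbK => /eqP ->; rewrite (d0 Hd).
Qed.

Lemma Psi_der P : Psi (mpoly_der d P) = \sum_(m <- msupp P) d (P@_m) *: phm m.
Proof. by rewrite /mpoly_der Psi_sum; apply: eq_bigr => m _; rewrite PsiXZ. Qed.

Lemma J_ideal : is_ideal J.
Proof.
split; first exact: Psi0.
  by move=> a b; rewrite /J PsiD => -> ->; rewrite addr0.
move=> r a; rewrite /J mulrC (PsiM chK sL lL n0 SG) => ->.
by rewrite big1 // => m _; rewrite mul0r scaler0.
Qed.

Lemma J_diff P : J P -> J (mpoly_der d P).
Proof.
rewrite /J Psi_der /Psi => h.
apply: (@KI K d Hd chK n L sL lL n0 _ _ _ (\max_(m <- msupp P) sz (phm m))) => //.
- by move=> m; apply: S_phm.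
- by move=> m mP; apply: (@leq_bigmax_seq _ _ predT (fun m => sz (phm m))).
Qed.

Lemma BC_J P : BC d L G P -> J P.
Proof. by case=> _; rewrite phi_LE. Qed.

Lemma DI_J P : DI P -> J P.
Proof.
move=> h; apply: h; first exact: J_ideal.
  exact: BC_J.
exact: J_diff.
Qed.

Lemma DI_ideal : is_ideal DI.
Proof.
split.
- by move=> I [I0 _ _] _ _.
- move=> a b ha hb I II hS hD; case: (II) => _ ID _.
  by apply: ID; [exact: ha II hS hD | exact: hb II hS hD].
- move=> r a ha I II hS hD; case: (II) => _ _ IM.
  by apply: IM; exact: ha II hS hD.
Qed.

Lemma DI_Z c P : DI P -> DI (c *: P).
Proof. by move=> h; rewrite -mul_mpolyC; case: DI_ideal => _ _; apply. Qed.

Lemma DI_D P Q : DI P -> DI Q -> DI (P + Q).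
Proof. by case: DI_ideal => _ h _; apply: h. Qed.

Lemma DI_gen P : BC d L G P -> DI P.
Proof. by move=> h I _ hS _; apply: hS. Qed.

Lemma DI_der P : DI P -> DI (mpoly_der d P).
Proof. move=> h I II hS hD; exact: (hD _ (h I II hS hD)). Qed.

Lemma DI0 : DI 0.
Proof. by case: DI_ideal. Qed.

Lemma size_lt_sub (s1 s2 : seq 'X_{1..t}) x :
  uniq s1 -> {subset s1 <= s2} -> x \in s2 -> x \notin s1 -> (size s1 < size s2)%N.
Proof.
move=> u1 sub xs2 xs1.
have u : uniq (x :: s1) by rewrite /= xs1 u1.
have sub2 : {subset x :: s1 <= s2}.
  by move=> y; rewrite inE => /orP [/eqP -> // | /sub].
exact: (uniq_leq_size u sub2).
Qed.

Lemma J_DI k P : (size (msupp P) <= k)%N -> J P -> DI P.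
Proof.
elim: k P => [|k IH] P hk JP.
  by move: hk; rewrite leqn0 size_eq0 => /eqP /msuppnil0 ->; exact: DI0.
have [->|P0] := eqVneq P 0; first exact: DI0.
have [m0 m0P] : exists m0, m0 \in msupp P.
  case e: (msupp P) => [|m0 s]; last by exists m0; rewrite inE eqxx.
  by move/msuppnil0: e => e; rewrite e eqxx in P0.
set c := P@_m0.
have c0 : c != 0 by rewrite -mcoeff_msupp.
set P' := c^-1 *: P.
have -> : P = c *: P' by rewrite /P' scalerA mulfV // scale1r.
apply: DI_Z.
have JP' : J P' by rewrite /J PsiZ JP scaler0.
have sub' : {subset msupp P' <= msupp P} by apply: msuppZ_le.
have hk' : (size (msupp P') <= k.+1)%N.
  by apply: leq_trans hk; apply: uniq_leq_size => //; exact: msupp_uniq.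
have P'm0 : P'@_m0 = 1 by rewrite mcoeffZ mulVf.
case: (boolP (all (fun m => d (P'@_m) == 0) (msupp P'))) => [/allP hall|/allPn [m1 m1P dm1]].
  apply: DI_gen; split; last by rewrite phi_LE.
  move=> m; rewrite /is_const; case: (boolP (m \in msupp P')) => [/hall //|].
  by rewrite mcoeff_msupp negbK => /eqP ->; rewrite (d0 Hd).
set Q := mpoly_der d P'.
have JQ : J Q by apply: J_diff.
have subQ : {subset msupp Q <= msupp P'}.
  move=> m; rewrite !mcoeff_msupp coef_der; apply: contraNneq => ->.
  by rewrite (d0 Hd).
have m0P' : m0 \in msupp P' by rewrite mcoeff_msupp P'm0 oner_neq0.
have m0Q : m0 \notin msupp Q by rewrite mcoeff_msupp coef_der P'm0 (d1 Hd) eqxx.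
have DQ : DI Q.
  apply: IH JQ; rewrite -ltnS; apply: leq_trans hk'.
  exact: size_lt_sub (msupp_uniq _) subQ m0P' m0Q.
set beta := P'@_m1.
set Rr := P' - (beta / d beta) *: Q.
have -> : P' = Rr + (beta / d beta) *: Q by rewrite /Rr subrK.
apply: DI_D; last exact: DI_Z.
have JR : J Rr by rewrite /J /Rr PsiD -scaleNr !PsiZ JP JQ !scaler0 addr0.
apply: IH JR; rewrite -ltnS; apply: leq_trans hk'.
have subR : {subset msupp Rr <= msupp P'}.
  by move=> m /msuppB_le; rewrite mem_cat => /orP [//|/msuppZ_le /subQ //].
have nR : m1 \notin msupp Rr.
  have eQ : Q@_m1 = d beta by rewrite /Q coef_der.
  rewrite mcoeff_msupp /Rr mcoeffB [X in _ - X]mcoeffZ eQ -/beta.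
  by rewrite mulfVK ?subrr ?eqxx //.
exact: (size_lt_sub (msupp_uniq Rr) subR m1P nR).
Qed.

End Main.

Unset Implicit Arguments.

Theorem corollary6p4 (K : fieldType) (d : K -> K) (n t : nat)
    (L : {poly K}) (G : 'I_t -> {poly K}) :
  is_derivation d ->
  constants_alg_closed d ->
  [pchar K] =i pred0 ->
  normal_form n L ->
  is_Goodearl_basis d n L G ->
  prime_ideal (diff_ideal_gen d (BC d L G)).
Proof.
move=> Hd _ chK [sL [lL _]] [[SG _ _] _ _ _ exh].
have n0 : (0 < n)%N.
  case: n sL exh => // sL exh.
  have L1 : L = 1.
    have h0 : L`_0 = 1 by rewrite -lL /lead_coef sL.
    by rewrite [L]size1_polyC ?sL // h0.
  set N := (\sum_(k < t) dop_ord (G k)).+1.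
  have Q0 : ('X^N : {poly K}) != 0 by rewrite -size_poly_gt0 size_polyXn.
  have cQ : in_centralizer d L 'X^N by rewrite /in_centralizer L1 mul1d (muld1 Hd).
  have [k] := exh _ cQ Q0; rewrite !modn0 /dop_ord size_polyXn /= => e.
  have : (dop_ord (G k) <= \sum_(k < t) dop_ord (G k))%N.
    by rewrite (bigD1 k) //= leq_addr.
  move=> h; have : (N <= \sum_(k < t) dop_ord (G k))%N by rewrite e; exact: h.
  by rewrite /N ltnn.
pose LR : dop Hd := L.
have sL' : size (LR : {poly K}) = n.+1 by [].
have lL' : lead_coef (LR : {poly K}) = 1 by [].
have SG' : forall k, GRing.comm LR (G k : dop Hd) by move=> k; exact: SG.
split.
- exact: DI_ideal.
- move=> /(DI_J chK sL' lL' n0 SG'); rewrite /J (Psi1 LR G) => /eqP.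
  by rewrite oner_eq0.
move=> a b /(DI_J chK sL' lL' n0 SG'); rewrite /J => hab.
have [Ja|Ja] := eqVneq (Psi LR G a) 0.
  by left; apply: (J_DI chK sL' lL' n0 SG' (leqnn _)).
have [Jb|Jb] := eqVneq (Psi LR G b) 0.
  by right; apply: (J_DI chK sL' lL' n0 SG' (leqnn _)).
exfalso; move: hab; rewrite (PsiM chK sL' lL' n0 SG') => /eqP; apply/negP.
apply: (@C2 K d Hd chK n LR sL' lL' n0 _ _ _ _ (\max_(m <- msupp b) size (phm LR G m : {poly K})) Ja).
- by move=> m; apply: S_phm.
- by move=> m mb; apply: (@leq_bigmax_seq _ _ predT (fun m => size (phm LR G m : {poly K}))).
- exact: Jb.
Qed.
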